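(* Let $k=4$, $p\in\mathbb{S}^n$, $R\in(0,\pi/2)$, $B_R=\{q:\mathbf{d}_p(q)\le R\}$, $y\in\partial B_R$, and $\gamma:[R,\pi]\to\mathbb{S}^n$ the unit-speed minimizing geodesic from $y$ to $-p$ with $\mathbf{d}_p(\gamma(s))=s$. Define on $B_R\setminus\{y\}$ \[Z=\Psi_y+\int_R^\pi h(s)\Psi_{\gamma(s)}\,ds,\qquad h(s):=\frac{\cos R}{\sin^2R}\sin s.\] Then at every point of $\partial B_R\setminus\{y\}$, \[-3\tan R\,\langle Z,\nabla\mathbf{d}_p\rangle=1+\int_R^\pi h(s)\,ds.\]
   Context: $\mathbb{S}^n$ is the unit round sphere with Levi-Civita connection $\nabla$; $\mathbf{d}_q$ is geodesic distance from $q$. With $k=4$: $I_k(r)=\int_0^r\sin^{k-1}s\,ds$, $\varphi(t)=I_k(t)\sin^{1-k}t$ for $t\in(0,\pi)$, $\varphi(0)=0$, $\Phi_q=(\varphi\circ\mathbf{d}_q)\nabla\mathbf{d}_q$ on $\mathbb{S}^n\setminus\{-q\}$, and $\Psi_q:=\Phi_{-q}$ on $\mathbb{S}^n\setminus\{q\}$. *)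

(* Defs.v *)
(* Points of R^{n+1} are represented as functions nat -> R, of which only the
   coordinates 0..n are meaningful; S^n = unit vectors of R^{n+1}. *)
From Stdlib Require Import Reals.
From Coquelicot Require Import Coquelicot.
Open Scope R_scope.

Definition dot (n : nat) (x y : nat -> R) : R := sum_f_R0 (fun i => x i * y i) n.

Definition on_sphere (n : nat) (x : nat -> R) : Prop := dot n x x = 1.

Definition veq (n : nat) (x y : nat -> R) : Prop := forall i, (i <= n)%nat -> x i = y i.

Definition vopp (x : nat -> R) : nat -> R := fun i => - x i.

Definition gdist (n : nat) (q x : nat -> R) : R := acos (dot n q x).

(* Riemannian gradient of d_q at x (x <> q, -q):
   grad d_q (x) = (cos(d) x - q) / sin(d), d = d_q(x);
   it is set to 0 at x = q and x = -q where it is undefined (at x = q it is only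
   ever multiplied by phi(0) = 0). *)
Definition grad_dist (n : nat) (q x : nat -> R) : nat -> R :=
  let d := gdist n q x in
  fun i => if Req_EM_T (sin d) 0 then 0 else (cos d * x i - q i) / sin d.

Definition kk : nat := 4.

Definition I_k (r : R) : R := RInt (fun s => sin s ^ (kk - 1)) 0 r.

Definition phi (t : R) : R :=
  if Req_EM_T t 0 then 0 else I_k t / sin t ^ (kk - 1).

Definition Phi (n : nat) (q : nat -> R) (x : nat -> R) : nat -> R :=
  fun i => phi (gdist n q x) * grad_dist n q x i.

Definition Psi (n : nat) (q : nat -> R) : (nat -> R) -> nat -> R := Phi n (vopp q).

Definition hfun (R0 s : R) : R := cos R0 / (sin R0 ^ 2) * sin s.

Definition Zfield (n : nat) (R0 : R) (y : nat -> R) (gamma : R -> nat -> R)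
  (x : nat -> R) : nat -> R :=
  fun i => Psi n y x i + RInt (fun s => hfun R0 s * Psi n (gamma s) x i) R0 PI.

(* Main.v *)
Require Import Defs.
From Stdlib Require Import Reals Lra Lia.
From Coquelicot Require Import Coquelicot.
Open Scope R_scope.

Lemma dot_ext n u v u' v' : (forall i, (i<=n)%nat -> u i = u' i) ->
  (forall i, (i<=n)%nat -> v i = v' i) -> dot n u v = dot n u' v'.
Proof. intros H1 H2. unfold dot. apply sum_eq. intros i Hi. rewrite H1, H2; auto. Qed.

Lemma dot_comm n u v : dot n u v = dot n v u.
Proof. unfold dot. apply sum_eq; intros; ring. Qed.

Lemma dot_lin3 n a b d u v w z :
  dot n (fun i => a*u i + b*v i + d*w i) z = a*dot n u z + b*dot n v z + d*dot n w z.
Proof. unfold dot. induction n; simpl; [ring| rewrite IHn; ring]. Qed.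

Lemma dot_lin2r n a b u v w :
  dot n u (fun i => a*v i + b*w i) = a*dot n u v + b*dot n u w.
Proof. unfold dot. induction n; simpl; [ring| rewrite IHn; ring]. Qed.

Lemma dot_sq3 n g p y a b :
  dot n (fun i => g i - a*p i - b*y i) (fun i => g i - a*p i - b*y i) =
  dot n g g - 2*a*dot n g p - 2*b*dot n g y + a^2*dot n p p + 2*a*b*dot n p y + b^2*dot n y y.
Proof. unfold dot. induction n; simpl; [ring| rewrite IHn; ring]. Qed.

Lemma dot_sq2 n u v s :
  dot n (fun i => u i + s*v i) (fun i => u i + s*v i) = dot n u u + 2*s*dot n u v + s^2*dot n v v.
Proof. unfold dot. induction n; simpl; [ring| rewrite IHn; ring]. Qed.

Lemma dot_vopp n q x : dot n (vopp q) x = - dot n q x.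
Proof. unfold dot, vopp. induction n; simpl; [ring| rewrite IHn; ring]. Qed.

Lemma dot_nonneg n u : 0 <= dot n u u.
Proof. unfold dot. induction n; simpl; nra. Qed.

Lemma dot_zero n u : dot n u u = 0 -> forall i, (i<=n)%nat -> u i = 0.
Proof.
  induction n; intros H i Hi.
  - unfold dot in H; simpl in H. assert (i = 0%nat) by lia; subst; nra.
  - pose proof (dot_nonneg n u) as H0. unfold dot in H, H0; simpl in H.
    fold (dot n u u) in H, H0.
    destruct (Nat.eq_dec i (S n)) as [->|Hne]; [nra|].
    apply IHn; [nra|lia].
Qed.

Lemma dot_bound n q x : on_sphere n q -> on_sphere n x -> -1 <= dot n q x <= 1.
Proof.
  unfold on_sphere; intros Hq Hx.
  pose proof (dot_nonneg n (fun i => q i + 1 * x i)) as H1.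
  pose proof (dot_nonneg n (fun i => q i + (-1) * x i)) as H2.
  rewrite dot_sq2 in H1, H2. rewrite Hq, Hx in *. split; nra.
Qed.

Lemma dot_one n q x : on_sphere n q -> on_sphere n x -> dot n q x = 1 ->
  forall i, (i<=n)%nat -> q i = x i.
Proof.
  unfold on_sphere; intros Hq Hx H i Hi.
  assert (H0 : dot n (fun i => q i + (-1) * x i) (fun i => q i + (-1) * x i) = 0).
  { rewrite dot_sq2, Hq, Hx, H; ring. }
  pose proof (dot_zero _ _ H0 i Hi). simpl in H1; lra.
Qed.

Lemma dot_mone n q x : on_sphere n q -> on_sphere n x -> dot n q x = -1 ->
  forall i, (i<=n)%nat -> q i = - x i.
Proof.
  unfold on_sphere; intros Hq Hx H i Hi.
  assert (H0 : dot n (fun i => q i + 1 * x i) (fun i => q i + 1 * x i) = 0).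
  { rewrite dot_sq2, Hq, Hx, H; ring. }
  pose proof (dot_zero _ _ H0 i Hi). simpl in H1; lra.
Qed.

Lemma cos_gdist n q x : on_sphere n q -> on_sphere n x -> cos (gdist n q x) = dot n q x.
Proof. intros; unfold gdist; apply cos_acos, dot_bound; auto. Qed.

Lemma I_k_val t : I_k t = 2/3 - cos t + cos t ^ 3 / 3.
Proof.
  unfold I_k. change (kk - 1)%nat with 3%nat.
  assert (H : is_RInt (fun s => sin s ^ 3) 0 t
     ((- cos t + cos t ^ 3 / 3) - (- cos 0 + cos 0 ^ 3 / 3))).
  { apply (is_RInt_derive (fun s => - cos s + cos s ^ 3 / 3)).
    - intros z _. auto_derive; auto. pose proof (sin2_cos2 z) as E. unfold Rsqr in E.
      assert (E' : sin z ^ 2 = 1 - cos z ^ 2) by (simpl; lra). replace (sin z ^ 3) with (sin z * sin z ^ 2) by ring. rewrite E'. field.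
    - intros z _. apply (@ex_derive_continuous R_AbsRing R_NormedModule). auto_derive; auto. }
  rewrite (is_RInt_unique _ _ _ _ H).
  rewrite cos_0. field.
Qed.

Lemma Psi_val n q x i : on_sphere n q -> on_sphere n x -> dot n q x < 1 -> (i <= n)%nat ->
  Psi n q x i = (2 - dot n q x) * (q i - dot n q x * x i) / (3 * (1 - dot n q x)^2).
Proof.
  intros Hq Hx Hd Hi.
  pose proof (dot_bound n q x Hq Hx) as Hb.
  unfold Psi, Phi, grad_dist, gdist. cbv zeta. rewrite dot_vopp.
  set (d := dot n q x) in *.
  destruct (Req_dec d (-1)) as [Hm|Hm].
  - assert (Hqi : q i = - x i) by (apply (dot_mone n q x); auto).
    replace (- d) with 1 by lra. rewrite acos_1.
    unfold phi. destruct (Req_EM_T 0 0) as [_|C]; [|congruence].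
    rewrite Hqi, Hm. field_simplify. lra. 
  - assert (Hb' : -1 <= - d <= 1) by lra.
    assert (Hs : sin (acos (- d)) = sqrt (1 - d^2)).
    { rewrite sin_acos; auto. f_equal. unfold Rsqr; ring. }
    assert (Hc : cos (acos (- d)) = - d) by (apply cos_acos; auto).
    assert (Hpos : 0 < 1 - d^2) by nra.
    set (sq := sqrt (1 - d^2)) in *.
    assert (Hsq : 0 < sq) by (apply sqrt_lt_R0; auto).
    assert (Hsq2 : sq ^ 2 = 1 - d^2) by (simpl; rewrite Rmult_1_r; apply sqrt_sqrt; lra).
    unfold phi. destruct (Req_EM_T (acos (- d)) 0) as [H0|H0].
    { exfalso. rewrite H0, sin_0 in Hs. lra. }
    destruct (Req_EM_T (sin (acos (- d))) 0) as [H1|H1]; [lra|].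
    rewrite I_k_val, Hs, Hc. change (kk - 1)%nat with 3%nat. unfold vopp.
    replace ((2 / 3 - - d + (- d) ^ 3 / 3) / sq ^ 3 * ((- d * x i - - q i) / sq))
      with ((2 / 3 + d - d ^ 3 / 3) * (q i - d * x i) / (sq ^ 2) ^ 2) by (field; lra).
    rewrite Hsq2. field. split; lra.
Qed.

Lemma grad_val n p x R0 i : gdist n p x = R0 -> sin R0 <> 0 ->
  grad_dist n p x i = (cos R0 * x i - p i) / sin R0.
Proof.
  intros H1 H2. unfold grad_dist. cbv zeta. rewrite H1.
  destruct (Req_EM_T (sin R0) 0); [contradiction|reflexivity].
Qed.

Lemma sum_is_RInt (F : nat -> R -> R) (w : nat -> R) a b n :
  (forall i, (i <= n)%nat -> ex_RInt (F i) a b) ->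
  is_RInt (fun s => sum_f_R0 (fun i => F i s * w i) n) a b
          (sum_f_R0 (fun i => RInt (F i) a b * w i) n).
Proof.
  induction n; intros H.
  - simpl. apply (@is_RInt_ext R_NormedModule (fun s => scal (w 0%nat) (F 0%nat s))).
    { intros; unfold scal; simpl; unfold mult; simpl; ring. }
    replace (RInt (F 0%nat) a b * w 0%nat) with (scal (w 0%nat) (RInt (F 0%nat) a b))
      by (unfold scal; simpl; unfold mult; simpl; ring).
    apply (@is_RInt_scal R_NormedModule); apply (@RInt_correct R_CompleteNormedModule), H; lia.
  - simpl. apply (@is_RInt_ext R_NormedModule (fun s => plus (sum_f_R0 (fun i => F i s * w i) n)
                                          (scal (w (S n)) (F (S n) s)))).
    { intros; unfold scal, plus; simpl; unfold mult; simpl; ring. }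
    replace (sum_f_R0 (fun i => RInt (F i) a b * w i) n + RInt (F (S n)) a b * w (S n))
      with (plus (sum_f_R0 (fun i => RInt (F i) a b * w i) n) (scal (w (S n)) (RInt (F (S n)) a b)))
      by (unfold scal, plus; simpl; unfold mult; simpl; ring).
    apply (@is_RInt_plus R_NormedModule).
    + apply IHn. intros; apply H; lia.
    + apply (@is_RInt_scal R_NormedModule); apply (@RInt_correct R_CompleteNormedModule), H; lia.
Qed.

Definition al (R0 s : R) := cos s - sin s * cos R0 / sin R0.
Definition be (R0 s : R) := sin s / sin R0.
Definition cs (R0 c s : R) := al R0 s * cos R0 + be R0 s * c.
Definition Gf R0 c s := hfun R0 s * ((2 - cs R0 c s) *
  (al R0 s * (- sin R0) + be R0 s * (cos R0 * (c - 1) / sin R0)) / (3 * (1 - cs R0 c s)^2)).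
Definition Pp R0 c s := - cos s ^ 2 + (c - cos R0 ^ 2) / sin R0 ^ 3 * sin s * (1 + cos R0 * cos s).
Definition Kf R0 c s := - (cos R0 / (3 * sin R0)) * (Pp R0 c s / (1 - cs R0 c s)).

Lemma Kf_deriv R0 c s : sin R0 <> 0 -> 1 - cs R0 c s <> 0 -> is_derive (Kf R0 c) s (Gf R0 c s).
Proof.
  intros H1 H2. unfold Kf, Pp, Gf, hfun.
  unfold cs, al, be in *.
  assert (H3 : sin R0 - ((cos s * sin R0 - sin s * cos R0) * cos R0 + sin s * c) <> 0).
  { intro H; apply H2. apply (Rmult_eq_reg_l (sin R0)); [|auto]. rewrite Rmult_0_r, <- H. field. auto. }
  auto_derive.
  - repeat split; auto.
  - pose proof (sin2_cos2 s) as E1. pose proof (sin2_cos2 R0) as E2.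
    unfold Rsqr in *.
    set (S := sin s) in *. set (C := cos s) in *. set (SR := sin R0) in *. set (CR := cos R0) in *.
    assert (E1' : S^2 = 1 - C^2) by (simpl; lra).
    assert (E2' : SR^2 = 1 - CR^2) by (simpl; lra).
    field_simplify_eq. ring [E1' E2']. split; auto.
Qed.


Lemma Gf_cont R0 c s : sin R0 <> 0 -> 1 - cs R0 c s <> 0 -> continuous (Gf R0 c) s.
Proof.
  intros H1 H2. apply (@ex_derive_continuous R_AbsRing R_NormedModule).
  unfold Gf, hfun. unfold cs, al, be in *.
  auto_derive. unfold Rdiv in H2.
  repeat apply Rmult_integral_contrapositive_currified; try lra.
Qed.

Definition Ef R0 c (p y x : nat -> R) i s := hfun R0 s * ((2 - cs R0 c s) *
  (al R0 s * p i + be R0 s * y i - cs R0 c s * x i) / (3 * (1 - cs R0 c s)^2)).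

Lemma Ef_cont R0 c p y x i s : sin R0 <> 0 -> 1 - cs R0 c s <> 0 -> continuous (Ef R0 c p y x i) s.
Proof.
  intros H1 H2. apply (@ex_derive_continuous R_AbsRing R_NormedModule).
  unfold Ef, hfun. unfold cs, al, be in *.
  auto_derive. unfold Rdiv in H2.
  repeat apply Rmult_integral_contrapositive_currified; try lra.
Qed.

Theorem lemma3p2 (n : nat) (p y : nat -> R) (R0 : R) (gamma : R -> nat -> R) :
  on_sphere n p ->
  0 < R0 < PI / 2 ->
  (* y in the boundary of B_R *)
  on_sphere n y -> gdist n p y = R0 ->
  (* gamma : [R,pi] -> S^n unit-speed minimizing geodesic from y to -p *)
  (forall s, R0 <= s <= PI -> on_sphere n (gamma s)) ->
  veq n (gamma R0) y ->
  veq n (gamma PI) (vopp p) ->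
  (forall s t, R0 <= s <= PI -> R0 <= t <= PI ->
     gdist n (gamma s) (gamma t) = Rabs (s - t)) ->
  (forall s, R0 <= s <= PI -> gdist n p (gamma s) = s) ->
  forall x : nat -> R,
    on_sphere n x -> gdist n p x = R0 -> ~ veq n x y ->
    - 3 * tan R0 * dot n (Zfield n R0 y gamma x) (grad_dist n p x)
    = 1 + RInt (hfun R0) R0 PI.
Proof.
  intros Hp HR Hy Hpy Hg Hg0 Hgpi Hgd Hgp x Hx Hpx Hxy.
  pose proof PI_RGT_0 as HPI.
  assert (HsR : 0 < sin R0) by (apply sin_gt_0; lra).
  assert (HcR : 0 < cos R0) by (apply cos_gt_0; lra).
  assert (HsR0 : sin R0 <> 0) by lra.
  assert (E2' : sin R0 ^ 2 = 1 - cos R0 ^ 2)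
    by (pose proof (sin2_cos2 R0); unfold Rsqr in *; simpl; lra).
  assert (dpx : dot n p x = cos R0) by (rewrite <- (cos_gdist n p x Hp Hx), Hpx; reflexivity).
  assert (dpy : dot n p y = cos R0) by (rewrite <- (cos_gdist n p y Hp Hy), Hpy; reflexivity).
  remember (dot n y x) as c eqn:Hc.
  assert (Hcb : -1 <= c <= 1) by (rewrite Hc; apply dot_bound; auto).
  assert (Hc1 : c < 1).
  { destruct (Req_dec c 1) as [E|E]; [|lra]. exfalso. apply Hxy. intros i Hi.
    symmetry. apply (dot_one n y x); auto. congruence. }
  assert (Hgam : forall s, R0 <= s <= PI -> forall i, (i<=n)%nat ->
            gamma s i = al R0 s * p i + be R0 s * y i).
  { intros s Hs.
    assert (d1 : dot n (gamma s) p = cos s).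
    { rewrite dot_comm, <- cos_gdist, Hgp; auto. }
    assert (d2 : dot n (gamma s) y = cos (s - R0)).
    { rewrite <- (dot_ext n (gamma s) (gamma R0) (gamma s) y); auto.
      rewrite <- cos_gdist, Hgd, Rabs_right; auto; try lra; apply Hg; lra. }
    assert (H0 : dot n (fun i => gamma s i - al R0 s * p i - be R0 s * y i)
                       (fun i => gamma s i - al R0 s * p i - be R0 s * y i) = 0).
    { rewrite dot_sq3, d1, d2, dpy. rewrite (Hg s Hs), Hp, Hy. rewrite cos_minus.
      unfold al, be.
      pose proof (sin2_cos2 s) as E1. unfold Rsqr in E1.
      assert (E1' : sin s ^ 2 = 1 - cos s ^ 2) by (simpl; lra).
      field_simplify_eq; auto. ring [E1' E2']. }
    intros i Hi. pose proof (dot_zero _ _ H0 i Hi). simpl in *. lra. }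
  assert (Hcs : forall s, R0 <= s <= PI -> dot n (gamma s) x = cs R0 c s).
  { intros s Hs.
    rewrite (dot_ext n (gamma s) x (fun i => al R0 s * p i + be R0 s * y i + 0 * x i) x).
    - rewrite dot_lin3, dpx, <- Hc. unfold cs. ring.
    - intros i Hi. rewrite Hgam; auto. ring.
    - auto. }
  assert (Hlt : forall s, R0 <= s <= PI -> dot n (gamma s) x < 1).
  { intros s Hs. destruct (dot_bound n (gamma s) x (Hg s Hs) Hx) as [_ Hb].
    destruct (Req_dec (dot n (gamma s) x) 1) as [E|E]; [|lra]. exfalso.
    pose proof (dot_one _ _ _ (Hg s Hs) Hx E) as Hgx.
    assert (Hcos : cos s = cos R0).
    { transitivity (dot n p (gamma s)).
      { rewrite <- cos_gdist, Hgp; auto. }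
      rewrite <- dpx. apply dot_ext; auto. }
    assert (Hs0 : s = R0).
    { rewrite <- (acos_cos s), <- (acos_cos R0), Hcos; auto; lra. }
    subst s. apply Hxy. intros i Hi. rewrite <- Hgx, Hg0; auto. }
  assert (Hu : forall s, R0 <= s <= PI -> 1 - cs R0 c s <> 0).
  { intros s Hs. rewrite <- Hcs; auto. specialize (Hlt s Hs). lra. }
  assert (Hcomp : forall i s, (i<=n)%nat -> R0 <= s <= PI ->
            hfun R0 s * Psi n (gamma s) x i = Ef R0 c p y x i s).
  { intros i s Hi Hs. rewrite Psi_val; auto. rewrite Hcs, Hgam; auto. }
  assert (HexE : forall i, (i <= n)%nat -> ex_RInt (Ef R0 c p y x i) R0 PI).
  { intros i Hi. apply (@ex_RInt_continuous R_CompleteNormedModule). rewrite Rmin_left, Rmax_right by lra.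
    intros z Hz. apply Ef_cont; auto. }
  set (g' := fun i => (cos R0 / sin R0) * x i + (-1 / sin R0) * p i).
  assert (Hgr : forall i, grad_dist n p x i = g' i).
  { intros i. rewrite (grad_val n p x R0 i); auto. unfold g'. field. auto. }
  assert (HZ : dot n (Zfield n R0 y gamma x) (grad_dist n p x) =
     dot n (Psi n y x) g' + sum_f_R0 (fun i => RInt (Ef R0 c p y x i) R0 PI * g' i) n).
  { unfold dot at 1 2. rewrite <- sum_plus. apply sum_eq. intros i Hi.
    unfold Zfield. rewrite Hgr.
    rewrite (RInt_ext (fun s => hfun R0 s * Psi n (gamma s) x i) (Ef R0 c p y x i)).
    - ring.
    - rewrite Rmin_left, Rmax_right by lra. intros z Hz. apply Hcomp; auto; lra. }
  rewrite <- (is_RInt_unique _ _ _ _ (sum_is_RInt _ g' R0 PI n HexE)) in HZ.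
  rewrite (RInt_ext _ (Gf R0 c)) in HZ.
  2:{ rewrite Rmin_left, Rmax_right by lra. intros z Hz.
      assert (Hz' : R0 <= z <= PI) by lra. pose proof (Hu z Hz') as Huz.
      change (sum_f_R0 (fun i => Ef R0 c p y x i z * g' i) n = Gf R0 c z).
      transitivity (hfun R0 z * (2 - cs R0 c z) / (3 * (1 - cs R0 c z)^2) *
         dot n (fun i => al R0 z * p i + be R0 z * y i + (- cs R0 c z) * x i) g').
      { unfold dot. rewrite scal_sum. apply sum_eq. intros i Hi. unfold Ef. field. auto. }
      unfold g'. rewrite dot_lin3, !dot_lin2r.
      rewrite dpx, <- Hc, (dot_comm n y p), dpy, (dot_comm n x p), dpx.
      unfold on_sphere in Hp, Hx. rewrite Hp, Hx.
      unfold Gf. set (SR := sin R0) in *. set (CR := cos R0) in *. set (CS := cs R0 c z) in *. set (H0 := hfun R0 z). field_simplify_eq; [ring [E2']| split; auto]. }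
  assert (HG : RInt (Gf R0 c) R0 PI = Kf R0 c PI - Kf R0 c R0).
  { apply is_RInt_unique. apply (is_RInt_derive (Kf R0 c)).
    - rewrite Rmin_left, Rmax_right by lra. intros z Hz. apply Kf_deriv; auto.
    - rewrite Rmin_left, Rmax_right by lra. intros z Hz. apply Gf_cont; auto. }
  assert (HH : RInt (hfun R0) R0 PI = cos R0 / sin R0 ^ 2 * (1 + cos R0)).
  { apply is_RInt_unique.
    replace (cos R0 / sin R0 ^ 2 * (1 + cos R0)) with
      ((- (cos R0 / sin R0 ^ 2) * cos PI) - (- (cos R0 / sin R0 ^ 2) * cos R0))
      by (rewrite cos_PI; ring).
    apply (is_RInt_derive (fun s => - (cos R0 / sin R0 ^ 2) * cos s)).
    - intros z _. unfold hfun. auto_derive; [auto| try field; auto].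
    - intros z _. apply (@ex_derive_continuous R_AbsRing R_NormedModule).
      unfold hfun. auto_derive; auto. }
  assert (HPs : dot n (Psi n y x) g' = - (2 - c) * cos R0 / (3 * sin R0 * (1 - c))).
  { rewrite (dot_ext n (Psi n y x) g'
       (fun i => ((2 - c) / (3 * (1 - c)^2)) * y i + (- (2 - c) * c / (3 * (1 - c)^2)) * x i + 0 * p i) g').
    - unfold g'. rewrite dot_lin3, !dot_lin2r.
      rewrite dpx, <- Hc, (dot_comm n y p), dpy, (dot_comm n x p), dpx.
      unfold on_sphere in Hp, Hx. rewrite Hp, Hx. field. split; lra.
    - intros i Hi. rewrite Psi_val; auto; try lra. rewrite <- Hc. field. lra.
    - auto. }
  rewrite HZ, HG, HH, HPs. unfold Kf, Pp, cs, al, be, tan.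
  rewrite sin_PI, cos_PI.
  field_simplify_eq.
  - set (SR := sin R0) in *. set (CR := cos R0) in *. ring [E2'].
  - repeat split; try lra. nra.
Qed.
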